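(* Let $X$ be a real Banach space and let $Y\subset X^*$ be a $w^*$-dense linear subspace such that: (i) the locally convex space $(X,\mu(X,Y))$ is complete; (ii) for every absolutely convex $w^*$-compact set $K\subset Y$, every convex $w^*$-sequentially closed subset of $K$ is $w^*$-closed. Then $(Y,w^* )$ has the Mazur property, i.e. every linear functional $f:Y\to\mathbb{R}$ which is $w^*$-sequentially continuous is $w^*$-continuous.
   Context: $\mu(X,Y)$ denotes the Mackey topology on $X$ associated to the dual pair $\langle X,Y\rangle$: the locally convex topology of uniform convergence on all absolutely convex $w^*$-compact subsets of $Y$. A subset $C$ of a topological space is sequentially closed if no sequence in $C$ converges to a point outside $C$. $w^*$ denotes the weak$^*$ topology $w(X^*,X)$ (restricted to $Y$). *)

(* Defs.v *)
(* Elements of the dual X^* are represented as functions X -> R that are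
   linear and (norm-)continuous.  The weak* topology w(X^*,X) is written out
   explicitly via its basic neighbourhoods (finitely many points of X, eps). *)
From Stdlib Require List.
From HB Require Import structures.
From mathcomp Require Import all_boot all_order all_algebra.
From mathcomp Require Import all_classical all_reals all_analysis.
Set Implicit Arguments. Unset Strict Implicit. Unset Printing Implicit Defensive.
Import Order.TTheory GRing.Theory Num.Theory.
Import numFieldNormedType.Exports.
Local Open Scope classical_set_scope.
Local Open Scope ring_scope.

Section Defs.
Context {R : realType} {X : normedModType R}.

Definition lin_functional (phi : X -> R) : Prop :=
  forall (a : R) (u v : X), phi (a *: u + v) = a * phi u + phi v.

Definition in_dual (phi : X -> R) : Prop := lin_functional phi /\ continuous phi.

Definition dual_subspace (Y : set (X -> R)) : Prop :=
  (forall y, Y y -> in_dual y) /\ Y (fun _ => 0) /\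
  (forall (a : R) y z, Y y -> Y z -> Y (fun x => a * y x + z x)).

Definition wnbhd (s : seq X) (eps : R) (y z : X -> R) : Prop :=
  forall x, x \in s -> `|z x - y x| < eps.

Definition wstar_dense (Y : set (X -> R)) : Prop :=
  forall phi, in_dual phi -> forall (s : seq X) (eps : R), 0 < eps ->
    exists y, Y y /\ wnbhd s eps phi y.

Definition wstar_open (Y U : set (X -> R)) : Prop :=
  U `<=` Y /\ forall y, U y -> exists (s : seq X) (eps : R), 0 < eps /\
    forall z, Y z -> wnbhd s eps y z -> U z.

Definition wstar_closed (Y C : set (X -> R)) : Prop :=
  C `<=` Y /\ forall y, Y y ->
    (forall (s : seq X) (eps : R), 0 < eps -> exists z, C z /\ wnbhd s eps y z) ->
    C y.

Definition wstar_compact (Y K : set (X -> R)) : Prop :=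
  K `<=` Y /\ forall (I : Type) (U : I -> set (X -> R)),
    (forall i, wstar_open Y (U i)) -> K `<=` \bigcup_i U i ->
    exists J : seq I, forall y, K y -> exists i, List.In i J /\ U i y.

Definition abs_convex (K : set (X -> R)) : Prop :=
  forall (a b : R) y z, K y -> K z -> `|a| + `|b| <= 1 ->
    K (fun x => a * y x + b * z x).

Definition convex_fset (C : set (X -> R)) : Prop :=
  forall (t : R) y z, C y -> C z -> 0 <= t <= 1 ->
    C (fun x => t * y x + (1 - t) * z x).

Definition wstar_cvg (u : nat -> X -> R) (y : X -> R) : Prop :=
  forall x, (fun n => u n x) @ \oo --> y x.

Definition wstar_seq_closed (Y C : set (X -> R)) : Prop :=
  forall (u : nat -> X -> R) y, (forall n, C (u n)) -> Y y -> wstar_cvg u y -> C y.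

(* The sets defining the Mackey topology mu(X,Y) *)
Definition mackey_set (Y K : set (X -> R)) : Prop :=
  abs_convex K /\ wstar_compact Y K.

(* (X, mu(X,Y)) is complete: every Cauchy filter converges.
   mu(X,Y) = topology of uniform convergence on the mackey_sets K;
   its basic entourages are {(a,b) | sup_{y in K} |y (a - b)| <= eps}. *)
Definition mackey_complete (Y : set (X -> R)) : Prop :=
  forall F : set_system X, ProperFilter F ->
    (forall K, mackey_set Y K -> forall eps : R, 0 < eps ->
       exists A, F A /\ forall a b, A a -> A b -> forall y, K y -> `|y (a - b)| <= eps) ->
    exists x0, forall K, mackey_set Y K -> forall eps : R, 0 < eps ->
       F [set z | forall y, K y -> `|y (z - x0)| <= eps].

Definition lin_on (Y : set (X -> R)) (f : (X -> R) -> R) : Prop :=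
  forall (a : R) y z, Y y -> Y z -> f (fun x => a * y x + z x) = a * f y + f z.

Definition wstar_seq_continuous (Y : set (X -> R)) (f : (X -> R) -> R) : Prop :=
  forall (u : nat -> X -> R) y, (forall n, Y (u n)) -> Y y -> wstar_cvg u y ->
    f (u n) @[n --> \oo] --> f y.

Definition wstar_continuous (Y : set (X -> R)) (f : (X -> R) -> R) : Prop :=
  forall y, Y y -> forall eps : R, 0 < eps ->
    exists (s : seq X) (delta : R), 0 < delta /\
      forall z, Y z -> wnbhd s delta y z -> `|f z - f y| < eps.

Definition mazur_property (Y : set (X -> R)) : Prop :=
  forall f, lin_on Y f -> wstar_seq_continuous Y f -> wstar_continuous Y f.

End Defs.

(* Main.v *)
Require Import Defs.
From mathcomp Require Import all_boot all_order all_algebra.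
From mathcomp Require Import all_classical all_reals all_analysis.
Set Implicit Arguments. Unset Strict Implicit. Unset Printing Implicit Defensive.
Import Order.TTheory GRing.Theory Num.Theory.
Import numFieldNormedType.Exports.
Local Open Scope classical_set_scope.
Local Open Scope ring_scope.

Definition abs_convex_gen {R : realType} {T : Type} (K : set (T -> R)) : Prop :=
  forall (a b : R) y z, K y -> K z -> `|a| + `|b| <= 1 ->
    K (fun x => a * y x + b * z x).

Definition Oset {R : realType} {X : normedModType R} (Y P : set (X -> R)) : set (X -> R) :=
  [set w | Y w /\ exists (s : seq X) (eps : R), 0 < eps /\
     forall z, Y z -> wnbhd s eps w z -> P z].

Lemma wnbhd_refl {R : realType} {X : normedModType R} (s : seq X) (e : R) (y : X -> R) :
  0 < e -> wnbhd s e y y.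
Proof. by move=> e0 x _; rewrite subrr normr0. Qed.

Lemma wnbhd_trans {R : realType} {X : normedModType R} (s : seq X) (e1 e2 : R) (a b c : X -> R) :
  wnbhd s e1 a b -> wnbhd s e2 b c -> wnbhd s (e1 + e2) a c.
Proof.
move=> h1 h2 x xs; have := h1 x xs; have := h2 x xs => h2' h1'.
rewrite (_ : c x - a x = (c x - b x) + (b x - a x)); last by rewrite addrA subrK.
by apply: (le_lt_trans (ler_normD _ _)); rewrite addrC; apply: ltrD.
Qed.

Lemma wnbhd_sym {R : realType} {X : normedModType R} (s : seq X) (e : R) (a b : X -> R) :
  wnbhd s e a b -> wnbhd s e b a.
Proof. by move=> h x xs; rewrite distrC; apply: h. Qed.

Lemma Oset_sub {R : realType} {X : normedModType R} (Y P : set (X -> R)) :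
  Oset Y P `<=` P.
Proof. by move=> w [Yw [s [e [e0 H]]]]; apply: H => //; apply: wnbhd_refl. Qed.

Lemma Oset_open {R : realType} {X : normedModType R} (Y P : set (X -> R)) :
  wstar_open Y (Oset Y P).
Proof.
split; first by move=> w [].
move=> w [Yw [s [e [e0 H]]]]; exists s, (e / 2); split; first by rewrite divr_gt0.
move=> z Yz wz; split => //; exists s, (e / 2); split; first by rewrite divr_gt0.
move=> z' Yz' zz'; apply: H => //.
have := wnbhd_trans wz zz'; by rewrite -splitr.
Qed.

Lemma wnbhd_mono {R : realType} {X : normedModType R} (s s' : seq X) (e e' : R) (a b : X -> R) :
  {subset s' <= s} -> e <= e' -> wnbhd s e a b -> wnbhd s' e' a b.
Proof. by move=> ss ee h x xs; apply: (lt_le_trans (h x (ss x xs))). Qed.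

Lemma nbhd_fin {R : realType} {X : normedModType R} (A : Type) (Y : set (X -> R))
  (P : A -> set (X -> R)) (y : X -> R) (J : list A) :
  (forall j, List.In j J -> exists (s : seq X) (e : R), 0 < e /\
       forall z, Y z -> wnbhd s e y z -> P j z) ->
  exists (s : seq X) (e : R), 0 < e /\
       forall z, Y z -> wnbhd s e y z -> forall j, List.In j J -> P j z.
Proof.
elim: J => [|j J IH] H.
  by exists [::], 1; split => // z _ _ j [].
have [s1 [e1 [e10 H1]]] := H j (or_introl erefl).
have [s2 [e2 [e20 H2]]] := IH (fun j' hj' => H j' (or_intror hj')).
exists (s1 ++ s2), (Num.min e1 e2); split; first by rewrite lt_min e10 e20.
move=> z Yz hz j' [<-|hj'].
  apply: H1 => //; apply: wnbhd_mono hz => //; last by rewrite ge_min lexx.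
  by move=> x xs; rewrite mem_cat xs.
apply: H2 => //; apply: wnbhd_mono hz => //; last by rewrite ge_min lexx orbT.
by move=> x xs; rewrite mem_cat xs orbT.
Qed.

From mathcomp Require Import ring lra.

Lemma one_step {R : realType} {T : Type} (L : set (T -> R)) (g v : (T -> R) -> R) (eps : R) :
  abs_convex_gen L ->
  (forall a b y z, L y -> L z -> g (fun x => a * y x + b * z x) = a * g y + b * g z) ->
  (forall a b y z, L y -> L z -> v (fun x => a * y x + b * z x) = a * v y + b * v z) ->
  (forall z, L z -> v z = 0 -> `|g z| <= eps) ->
  exists c, forall z, L z -> `|g z - c * v z| <= eps.
Proof.
move=> Lac glin vlin H.
have negL z : L z -> [/\ L (fun x => -1 * z x + 0 * z x),
   g (fun x => -1 * z x + 0 * z x) = - g z & v (fun x => -1 * z x + 0 * z x) = - v z].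
  move=> Lz; split.
  - by apply: Lac => //; rewrite normrN normr1 normr0 addr0.
  - by rewrite glin // mul0r addr0 mulN1r.
  - by rewrite vlin // mul0r addr0 mulN1r.
have key z w : L z -> L w -> 0 < v z -> 0 < v w ->
    (g z - eps) * v w <= (g w + eps) * v z.
  move=> Lz Lw vz vw.
  set S' := v z + v w.
  have S'0 : 0 < S' by rewrite addr_gt0.
  have iS : 0 < S'^-1 by rewrite invr_gt0.
  set a := v w / S'; set b := - (v z) / S'.
  have Lq : L (fun x => a * z x + b * w x).
    apply: Lac => //.
    rewrite /a /b !normrM normrN (gtr0_norm vz) (gtr0_norm vw).
    by rewrite (gtr0_norm iS) -mulrDl addrC divff // gt_eqF.
  have vq : v (fun x => a * z x + b * w x) = 0.
    rewrite vlin // /a /b; field; by rewrite /S' gt_eqF.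
  have := H _ Lq vq; rewrite glin // => /(le_trans (ler_norm _)).
  have -> : a * g z + b * g w = (v w * g z - v z * g w) / S'.
    by rewrite /a /b; field; rewrite /S' gt_eqF.
  rewrite ler_pdivrMr // /S' => h; nra.
pose S := [set r | exists z, L z /\ 0 < v z /\ r = (g z - eps) / v z].
have bound z : L z -> 0 < v z -> forall c, (g z - eps) / v z <= c -> c <= (g z + eps) / v z ->
    `|g z - c * v z| <= eps.
  move=> Lz vz c; rewrite ler_pdivrMr // ler_pdivlMr // => h1 h2.
  by rewrite ler_norml; apply/andP; split; lra.
case: (pselect (exists w, L w /\ 0 < v w)) => [[w0 [Lw0 vw0]]|nw].
  have ubS z : L z -> 0 < v z -> ubound S ((g z + eps) / v z).
    move=> Lz vz r [z' [Lz' [vz' ->]]].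
    by rewrite ler_pdivrMr // mulrAC ler_pdivlMr // key.
  have hS : has_sup S.
    split; first by exists ((g w0 - eps) / v w0), w0.
    by exists ((g w0 + eps) / v w0); apply: ubS.
  exists (sup S) => z Lz.
  have pos z' : L z' -> 0 < v z' -> `|g z' - sup S * v z'| <= eps.
    move=> Lz' vz'; apply: bound => //.
      by apply: sup_upper_bound => //; exists z'.
    by apply: ge_sup; [case: hS|apply: ubS].
  case: (ltgtP (v z) 0) => vz.
  - have [Ln gn vn] := negL z Lz.
    have := pos _ Ln; rewrite gn vn oppr_gt0 => /(_ vz).
    by rewrite mulrN opprK (_ : - g z + _ = - (g z - sup S * v z)) ?normrN // opprB addrC.
  - exact: pos.
  - by rewrite vz mulr0 subr0; apply: H.
exists 0 => z Lz; rewrite mul0r subr0.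
case: (ltgtP (v z) 0) => vz.
- have [Ln gn vn] := negL z Lz.
  by exfalso; apply: nw; exists (fun x => -1 * z x + 0 * z x); rewrite vn oppr_gt0.
- by exfalso; apply: nw; exists z.
- exact: H.
Qed.


Lemma lf0 {R : realType} {X : normedModType R} (phi : X -> R) :
  lin_functional phi -> phi 0 = 0.
Proof.
move=> H; have := H 1 0 0; rewrite scaler0 addr0 mul1r.
by move/(congr1 (fun t => t - phi 0)); rewrite subrr addrK.
Qed.

Lemma lfB {R : realType} {X : normedModType R} (phi : X -> R) (a b : X) :
  lin_functional phi -> phi (a - b) = phi a - phi b.
Proof.
move=> H; have := H (-1) b a; rewrite scaleN1r mulN1r addrC => ->.
by rewrite addrC.
Qed.

Lemma claim {R : realType} {X : normedModType R} (Y : set (X -> R)) (s : seq X) :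
  forall (L : set (X -> R)) (g : (X -> R) -> R) (eps : R),
  (forall y, Y y -> lin_functional y) -> L `<=` Y -> abs_convex_gen L ->
  (forall a b y z, L y -> L z -> g (fun x => a * y x + b * z x) = a * g y + b * g z) ->
  (forall z, L z -> (forall x, x \in s -> z x = 0) -> `|g z| <= eps) ->
  exists x0 : X, forall z, L z -> `|g z - z x0| <= eps.
Proof.
elim: s => [|x1 s IH] L g eps Ylin LY Lac glin H.
  exists 0 => z Lz; rewrite (lf0 (Ylin _ (LY _ Lz))) subr0.
  by apply: H => // x; rewrite in_nil.
pose L' := [set z | L z /\ forall x, x \in s -> z x = 0].
have L'ac : abs_convex_gen L'.
  move=> a b y z [Ly hy] [Lz hz] hab; split; first exact: Lac.
  by move=> x xs; rewrite hy // hz // !mulr0 addr0.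
have [c Hc] : exists c, forall z, L' z -> `|g z - c * z x1| <= eps.
  apply: (@one_step R X L' g (fun z => z x1)) => //.
  - by move=> a b y z [Ly _] [Lz _]; apply: glin.
  - move=> z [Lz hz] zx1; apply: H => // x; rewrite in_cons => /orP[/eqP ->|]//.
    exact: hz.
have glin' : forall a b y z, L y -> L z ->
    (fun z => g z - c * z x1) (fun x => a * y x + b * z x) =
    a * (fun z => g z - c * z x1) y + b * (fun z => g z - c * z x1) z.
  by move=> a b y z Ly Lz /=; rewrite glin //; ring.
have [x' Hx'] := IH L (fun z => g z - c * z x1) eps Ylin LY Lac
  glin' (fun z Lz hz => Hc z (conj Lz hz)).
exists (c *: x1 + x') => z Lz.
rewrite (Ylin _ (LY _ Lz)).
have := Hx' z Lz; rewrite /=.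
by rewrite (_ : g z - (c * z x1 + z x') = g z - c * z x1 - z x') //; ring.
Qed.


Lemma Y0 {R : realType} {X : normedModType R} (Y : set (X -> R)) :
  dual_subspace Y -> Y (fun _ => 0).
Proof. by case=> _ []. Qed.

Lemma Ylc {R : realType} {X : normedModType R} (Y : set (X -> R)) a b y z :
  dual_subspace Y -> Y y -> Y z -> Y (fun x => a * y x + b * z x).
Proof.
move=> [_ [Y0 Yc]] Yy Yz.
have Ybz : Y (fun x => b * z x).
  have := Yc b z (fun _ => 0) Yz Y0.
  by rewrite (_ : (fun x => b * z x + 0) = (fun x => b * z x)) //; apply: funext => x; rewrite addr0.
exact: Yc.
Qed.

Lemma f0 {R : realType} {X : normedModType R} (Y : set (X -> R)) f :
  dual_subspace Y -> lin_on Y f -> f (fun _ => 0) = 0.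
Proof.
move=> DY fl; have := fl 1 _ _ (Y0 DY) (Y0 DY).
rewrite (_ : (fun x : X => 1 * 0 + 0) = (fun _ => 0 : R)); last first.
  by apply: funext => x; rewrite mul1r addr0.
by rewrite mul1r => /(congr1 (fun t => t - f (fun _ => 0))); rewrite subrr addrK.
Qed.

Lemma flc {R : realType} {X : normedModType R} (Y : set (X -> R)) f a b y z :
  dual_subspace Y -> lin_on Y f -> Y y -> Y z ->
  f (fun x => a * y x + b * z x) = a * f y + b * f z.
Proof.
move=> DY fl Yy Yz.
have Ybz : Y (fun x => b * z x).
  have := Ylc b 0 DY Yz Yz.
  by rewrite (_ : (fun x => b * z x + 0 * z x) = (fun x => b * z x)) //; apply: funext => x; rewrite mul0r addr0.
rewrite (fl a y (fun x => b * z x)) //; congr (_ + _).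
have := fl b z (fun _ => 0) Yz (Y0 DY); rewrite (f0 DY fl) addr0.
by rewrite (_ : (fun x => b * z x + 0) = (fun x => b * z x)) //; apply: funext => x; rewrite addr0.
Qed.

Lemma cpt_seq_closed {R : realType} {X : normedModType R} (Y K : set (X -> R)) :
  wstar_compact Y K -> forall u y, (forall n, K (u n)) -> Y y -> wstar_cvg u y -> K y.
Proof.
move=> [KY Kc] u y Ku Yy cv; apply: contrapT => nKy.
have ex z : exists x, K z -> z x != y x.
  case: (pselect (K z)) => Kz; last by exists 0.
  apply: contrapT => nx; apply: nKy.
  suff <- : z = y by [].
  apply: funext => x; apply: contrapT => hx; apply: nx; exists x => _; exact/eqP.
have [gx Hgx] := choice ex.
pose d z := `|z (gx z) - y (gx z)|.
have dpos z : K z -> 0 < d z by move=> Kz; rewrite /d normr_gt0 subr_eq0 Hgx.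
pose U z := Oset Y [set w | K z /\ `|w (gx z) - z (gx z)| < d z / 2].
have cov : K `<=` \bigcup_i U i.
  move=> z Kz; exists z => //; split; first exact: KY.
  exists [:: gx z], (d z / 2); split; first by rewrite divr_gt0 // dpos.
  move=> z' _ hz'; split => //; apply: hz'; by rewrite mem_seq1.
have [J HJ] := Kc _ U (fun z => Oset_open _ _) cov.
have ev : forall J' : list (X -> R), \forall n \near eventually,
    forall z, List.In z J' -> K z -> `|y (gx z) - u n (gx z)| < d z / 2.
  elim => [|z J' IH]; first by apply: nearW => n z [].
  case: (pselect (K z)) => Kz.
    have h2 : \forall n \near eventually, `|y (gx z) - u n (gx z)| < d z / 2.
      have := cv (gx z) => /cvgr_dist_lt h; apply: h.
      by rewrite divr_gt0 // dpos.
    near=> n => z' [<-|hz'] Kz'; first by near: n; exact: h2.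
    by apply: (near IH n).
  near=> n => z' [<-|hz'] Kz' //; by apply: (near IH n).
have [n Hn] := filter_ex (ev J).
have [z [Jz /Oset_sub [Kz hz]]] := HJ _ (Ku n).
have hn := Hn z Jz Kz.
have : `|z (gx z) - y (gx z)| < d z.
  rewrite (_ : z (gx z) - y (gx z) = (z (gx z) - u n (gx z)) + (u n (gx z) - y (gx z))); last first.
    by rewrite addrA subrK.
  apply: le_lt_trans (ler_normD _ _) _.
  by rewrite [d z]splitr; apply: ltrD; rewrite distrC.
by rewrite ltxx.
Unshelve. all: by end_near.
Qed.


Lemma step1 {R : realType} {X : normedModType R} (Y : set (X -> R)) f :
  dual_subspace Y -> lin_on Y f -> wstar_seq_continuous Y f ->
  (forall K, mackey_set Y K ->
     forall C, C `<=` K -> convex_fset C -> wstar_seq_closed Y C -> wstar_closed Y C) ->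
  forall K, mackey_set Y K -> forall eps : R, 0 < eps ->
  exists s : seq X, forall z, K z -> (forall x, x \in s -> z x = 0) -> `|f z| <= eps.
Proof.
move=> DY fl fsc Hii K [Kac Kc] eps e0.
have KY := Kc.1.
pose C := [set z | K z /\ eps <= f z].
have Ccl : wstar_closed Y C.
  apply: (Hii K (conj Kac Kc) C).
  - by move=> z [].
  - move=> t y z [Ky fy] [Kz fz] /andP[t0 t1]; split.
      apply: Kac => //; rewrite (ger0_norm t0) ger0_norm ?subr_ge0 //.
      by rewrite addrC subrK.
    rewrite (flc _ _ DY fl (KY _ Ky) (KY _ Kz)); nra.
  - move=> u y Cu Yy cv.
    have Ky := cpt_seq_closed Kc (fun n => (Cu n).1) Yy cv.
    split => //.
    have fcv := fsc u y (fun n => KY _ (Cu n).1) Yy cv.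
    have nr : \forall n \near eventually, [set x | eps <= x] (f (u n)).
      by apply: nearW => n; case: (Cu n).
    have := closed_cvg [set x | eps <= x] (@closed_ge _ eps) nr _ fcv.
    by apply.
have [s [e [e0' He]]] : exists s e, 0 < e /\ forall z, C z -> ~ wnbhd s e (fun _ => 0) z.
  apply: contrapT => nH.
  have : C (fun _ => 0).
    apply: Ccl.2; first exact: Y0.
    move=> s e e0'; apply: contrapT => nz; apply: nH; exists s, e; split => // z Cz wz.
    by apply: nz; exists z.
  by case=> _; rewrite (f0 DY fl); rewrite leNgt e0.
exists s => z Kz hz.
have wz z' : (forall x, x \in s -> z' x = 0) -> wnbhd s e (fun _ => 0) z'.
  by move=> h x xs; rewrite h // subrr normr0.
have lt1 : f z < eps.
  by rewrite ltNge; apply/negP => h; apply: (He z) => //; apply: wz.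
pose nz := fun x => -1 * z x + 0 * z x.
have Knz : K nz by apply: Kac => //; rewrite normrN normr1 normr0 addr0.
have lt2 : f nz < eps.
  rewrite ltNge; apply/negP => h; apply: (He nz) => //; apply: wz.
  by move=> x xs; rewrite /nz hz // !mulr0 addr0.
move: lt2; rewrite /nz (flc _ _ DY fl (KY _ Kz) (KY _ Kz)) => lt2.
by rewrite ler_norml; apply/andP; split; lra.
Qed.


Lemma In_mem {T : eqType} (x : T) (s : seq T) : x \in s -> List.In x s.
Proof. by elim: s => [|a s IH] //=; rewrite in_cons => /orP[/eqP ->|/IH]; [left|right]. Qed.

Lemma sum_ge {R : realType} {X : eqType} (y : X -> R) (s : seq X) x :
  x \in s -> `|y x| <= \sum_(x' <- s) `|y x'|.
Proof.
elim: s => [|a s IH] //; rewrite in_cons big_cons => /orP[/eqP ->|/IH h].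
  by rewrite lerDl sumr_ge0.
by apply: le_trans h _; rewrite lerDr.
Qed.

Definition seg {R : realType} {X : Type} (y : X -> R) : set (X -> R) :=
  [set z | exists t : R, `|t| <= 1 /\ z = (fun x => t * y x)].

Lemma Yscale {R : realType} {X : normedModType R} (Y : set (X -> R)) (t : R) y :
  dual_subspace Y -> Y y -> Y (fun x => t * y x).
Proof.
move=> DY Yy; have := Ylc t 0 DY Yy Yy.
by rewrite (_ : (fun x => t * y x + 0 * y x) = (fun x => t * y x)) //; apply: funext => x; rewrite mul0r addr0.
Qed.

Lemma seg_mackey {R : realType} {X : normedModType R} (Y : set (X -> R)) y :
  dual_subspace Y -> Y y -> mackey_set Y (seg y).
Proof.
move=> DY Yy; split.
  move=> a b _ _ [t1 [t1l ->]] [t2 [t2l ->]] hab.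
  exists (a * t1 + b * t2); split; last by apply: funext => x; rewrite mulrDl !mulrA.
  apply: le_trans (ler_normD _ _) _; rewrite !normrM; apply: le_trans hab.
  by apply: lerD; apply: ler_piMr.
split; first by move=> z [t [_ ->]]; apply: Yscale.
move=> I U Uo cov.
have [i0 _] : exists i0 : I, True.
  have s0 : seg y (fun x => 0 * y x) by exists 0; rewrite normr0 ler01.
  by have [i _ _] := cov _ s0; exists i.
have ex t : exists p : I * R, `|t| <= 1 -> 0 < p.2 /\
    forall t', `|t' - t| < p.2 -> U p.1 (fun x => t' * y x).
  case: (pselect (`|t| <= 1)) => ht; last by exists (i0, 1).
  have st : seg y (fun x => t * y x) by exists t.
  have [i _ Ui] := cov _ st.
  have [s [e [e0 He]]] := (Uo i).2 _ Ui.
  pose M := 1 + \sum_(x <- s) `|y x|.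
  have M0 : 0 < M by rewrite /M ltr_pwDl // sumr_ge0.
  exists (i, e / M) => _; split; first by rewrite divr_gt0.
  move=> t' ht'; apply: He; first exact: Yscale.
  move=> x xs /=; rewrite -mulrBl normrM.
  apply: (@le_lt_trans _ _ (`|t' - t| * M)).
    apply: ler_wpM2l => //; apply: le_trans (sum_ge y xs) _; by rewrite lerDr.
  by rewrite -ltr_pdivlMr.
have [p Hp] := choice ex.
have sc : compact (`[(-1 : R), 1]%classic) by apply: segment_compact.
rewrite compact_cover in sc.
have cov' : `[(-1 : R), 1]%classic `<=` cover `[(-1 : R), 1]%classic (fun t => ball t (p t).2).
  move=> t ht; exists t => //; apply: ballxx.
  have ht' : `|t| <= 1 by move: ht; rewrite /= in_itv /= -ler_norml.
  exact: (Hp t ht').1.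
have [D' sD' cD'] := sc R `[-1, 1]%classic (fun t => ball t (p t).2)
  (fun i _ => ball_open _ _) cov'.
exists (List.map (fun t => (p t).1) (finmap.enum_fset D')) => z [t [ht ->]].
have [t' t'D' bt'] := cD' t (ltac:(by rewrite /= in_itv /= -ler_norml)).
exists (p t').1; split; first by apply: List.in_map; apply: In_mem.
have ht' : `|t'| <= 1.
  by have := set_mem (sD' _ t'D'); rewrite /= in_itv /= -ler_norml.
apply: (Hp t' ht').2; move: bt'; by rewrite /ball /= distrC.
Qed.


Definition msum {R : realType} {X : Type} (K1 K2 : set (X -> R)) : set (X -> R) :=
  [set z | exists y1 y2, K1 y1 /\ K2 y2 /\ z = (fun x => y1 x + y2 x)].

Lemma wnbhd_add {R : realType} {X : normedModType R} (s : seq X) (e1 e2 : R) (y1 y2 a b : X -> R) :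
  wnbhd s e1 y1 a -> wnbhd s e2 y2 b ->
  wnbhd s (e1 + e2) (fun x => y1 x + y2 x) (fun x => a x + b x).
Proof.
move=> h1 h2 x xs; rewrite (_ : a x + b x - (y1 x + y2 x) = (a x - y1 x) + (b x - y2 x)); last first.
  by rewrite opprD addrACA.
by apply: le_lt_trans (ler_normD _ _) _; apply: ltrD; [apply: h1|apply: h2].
Qed.

Lemma msum_mackey {R : realType} {X : normedModType R} (Y K1 K2 : set (X -> R)) :
  dual_subspace Y -> mackey_set Y K1 -> mackey_set Y K2 -> mackey_set Y (msum K1 K2).
Proof.
move=> DY [K1ac [K1Y K1c]] [K2ac [K2Y K2c]]; split.
  move=> a b _ _ [y1 [y2 [Ky1 [Ky2 ->]]]] [w1 [w2 [Kw1 [Kw2 ->]]]] hab.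
  exists (fun x => a * y1 x + b * w1 x), (fun x => a * y2 x + b * w2 x).
  split; first exact: K1ac.
  split; first exact: K2ac.
  by apply: funext => x; ring.
split.
  move=> z [y1 [y2 [Ky1 [Ky2 ->]]]].
  have := Ylc 1 1 DY (K1Y _ Ky1) (K2Y _ Ky2).
  by rewrite (_ : (fun x => 1 * y1 x + 1 * y2 x) = (fun x => y1 x + y2 x)) //; apply: funext => x; rewrite !mul1r.
move=> I U Uo cov.
case: (pselect (exists z, msum K1 K2 z)) => [[z0 Mz0]|nM]; last first.
  by exists [::] => z Mz; exfalso; apply: nM; exists z.
have [i0 _ _] := cov _ Mz0.
have ex (pr : (X -> R) * (X -> R)) : exists q : I * seq X * R, K1 pr.1 -> K2 pr.2 ->
   0 < q.2 /\ forall z, Y z -> wnbhd q.1.2 q.2 (fun x => pr.1 x + pr.2 x) z -> U q.1.1 z.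
  case: (pselect (K1 pr.1 /\ K2 pr.2)) => [[k1 k2]|nk]; last first.
    by exists (i0, [::], 1) => k1 k2; exfalso; apply: nk.
  have Ms : msum K1 K2 (fun x => pr.1 x + pr.2 x) by exists pr.1, pr.2.
  have [i _ Ui] := cov _ Ms.
  have [s [e [e0 He]]] := (Uo i).2 _ Ui.
  by exists (i, s, e).
have [sel Hsel] := choice ex.
pose ii y1 y2 := (sel (y1, y2)).1.1.
pose ss y1 y2 := (sel (y1, y2)).1.2.
pose ee y1 y2 := (sel (y1, y2)).2.
pose V y1 y2 := Oset Y [set w | K2 y2 /\ wnbhd (ss y1 y2) (ee y1 y2 / 2) y2 w].
have exJ2 y1 : exists J2 : seq (X -> R), K1 y1 ->
    forall w, K2 w -> exists y2, List.In y2 J2 /\ V y1 y2 w.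
  case: (pselect (K1 y1)) => k1; last by exists [::].
  have covV : K2 `<=` \bigcup_i V y1 i.
    move=> y2 k2; exists y2 => //; split; first exact: K2Y.
    have [e0 _] := Hsel (y1, y2) k1 k2.
    exists (ss y1 y2), (ee y1 y2 / 2); split; first by rewrite divr_gt0.
    by move=> z _ hz; split.
  have [J HJ] := K2c _ (V y1) (fun _ => Oset_open _ _) covV.
  by exists J.
have [J2 HJ2] := choice exJ2.
pose W y1 := Oset Y [set w | K1 y1 /\ forall y2, List.In y2 (J2 y1) -> K2 y2 ->
   wnbhd (ss y1 y2) (ee y1 y2 / 2) y1 w].
have covW : K1 `<=` \bigcup_i W i.
  move=> y1 k1; exists y1 => //; split; first exact: K1Y.
  have := @nbhd_fin R X (X -> R) Y
    (fun j => [set w | K2 j -> wnbhd (ss y1 j) (ee y1 j / 2) y1 w]) y1 (J2 y1).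
  case.
    move=> j _; case: (pselect (K2 j)) => k2; last first.
      by exists [::], 1; split => // z _ _ /k2.
    have [e0 _] := Hsel (y1, j) k1 k2.
    exists (ss y1 j), (ee y1 j / 2); split; first by rewrite divr_gt0.
    by move=> z _ hz _.
  move=> s [e [e0 He]]; exists s, e; split => // z Yz hz; split => // y2 hy2 k2.
  exact: He.
have [J1 HJ1] := K1c _ W (fun _ => Oset_open _ _) covW.
exists (List.flat_map (fun y1 => List.map (fun y2 => ii y1 y2) (J2 y1)) J1).
move=> z [a [b [Ka [Kb ->]]]].
have [y1 [Jy1 /Oset_sub [k1 Hy1]]] := HJ1 _ Ka.
have [y2 [Jy2 /Oset_sub [k2 Hy2]]] := HJ2 y1 k1 _ Kb.
exists (ii y1 y2); split.
  apply/List.in_flat_map; exists y1; split => //.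
  by apply: List.in_map.
have [e0 Hu] := Hsel (y1, y2) k1 k2.
apply: Hu.
  have := Ylc 1 1 DY (K1Y _ Ka) (K2Y _ Kb).
  by rewrite (_ : (fun x => 1 * a x + 1 * b x) = (fun x => a x + b x)) //; apply: funext => x; rewrite !mul1r.
have := wnbhd_add (Hy1 y2 Jy2 k2) Hy2.
by rewrite -splitr.
Qed.

Theorem proposition3p1 (R : realType) (X : completeNormedModType R)
  (Y : set (X -> R)) :
  dual_subspace Y ->
  wstar_dense Y ->
  mackey_complete Y ->
  (forall K, mackey_set Y K ->
     forall C, C `<=` K -> convex_fset C -> wstar_seq_closed Y C -> wstar_closed Y C) ->
  mazur_property Y.
Proof.
move=> DY _ Mc Hii f fl fsc.
have Ylin y : Y y -> lin_functional y by move=> Yy; exact: (DY.1 y Yy).1.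
pose Ag K eps := [set x : X | forall y, K y -> `|f y - y x| <= eps].
have step2 K eps : mackey_set Y K -> 0 < eps -> exists x, Ag K eps x.
  move=> MK e0; have [s Hs] := step1 DY fl fsc Hii MK e0.
  have glin : forall a b y z, K y -> K z ->
      f (fun x => a * y x + b * z x) = a * f y + b * f z.
    by move=> a b y z Ky Kz; apply: (flc _ _ DY fl (MK.2.1 _ Ky) (MK.2.1 _ Kz)).
  have [x0 Hx0] := claim Ylin MK.2.1 MK.1 glin Hs.
  by exists x0.
have seg0 y : seg y (fun _ => 0).
  by exists 0; split; [rewrite normr0 ler01|apply: funext => x; rewrite mul0r].
pose F : set_system X := fun A => exists K eps,
  [/\ mackey_set Y K, K (fun _ => 0), 0 < eps & Ag K eps `<=` A].
have FF : ProperFilter F.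
  split.
    move=> [K [eps [MK _ e0 sub]]]; have [x Ax] := step2 K eps MK e0; exact: sub x Ax.
  split.
  - exists (seg (fun _ => 0)), 1; split => //; apply: seg_mackey => //; exact: Y0.
  - move=> A B [K1 [e1 [M1 k1 e1p s1]]] [K2 [e2 [M2 k2 e2p s2]]].
    exists (msum K1 K2), (Num.min e1 e2); split.
    + exact: msum_mackey.
    + exists (fun _ => 0), (fun _ => 0); split => //; split => //.
      by apply: funext => x; rewrite addr0.
    + by rewrite lt_min e1p e2p.
    + move=> x hx; split; [apply: s1|apply: s2] => y Ky.
      * have : msum K1 K2 y.
          by exists y, (fun _ => 0); split => //; split => //; apply: funext => x'; rewrite addr0.
        by move/hx/le_trans; apply; rewrite ge_min lexx.
      * have : msum K1 K2 y.
          by exists (fun _ => 0), y; split => //; split => //; apply: funext => x'; rewrite add0r.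
        by move/hx/le_trans; apply; rewrite ge_min lexx orbT.
  - move=> P Q PQ [K [eps [MK k0 e0 sub]]]; exists K, eps; split => //.
    exact: subset_trans sub PQ.
have cauchy : forall K, mackey_set Y K -> forall eps : R, 0 < eps ->
    exists A, F A /\ forall a b, A a -> A b -> forall y, K y -> `|y (a - b)| <= eps.
  move=> K MK eps e0.
  case: (pselect (exists y0, K y0)) => [[y0 Ky0]|nK]; last first.
    by exists setT; split; [exact: filterT|move=> a b _ _ y Ky; exfalso; apply: nK; exists y].
  have k0 : K (fun _ => 0).
    have := MK.1 0 0 y0 y0 Ky0 Ky0; rewrite normr0 addr0 ler01 => /(_ isT).
    by rewrite (_ : (fun x => 0 * y0 x + 0 * y0 x) = (fun _ => 0)) //; apply: funext => x; rewrite !mul0r addr0.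
  exists (Ag K (eps / 2)); split.
    by exists K, (eps / 2); split => //; rewrite divr_gt0.
  move=> a b Aa Ab y Ky; rewrite (lfB _ _ (Ylin y (MK.2.1 y Ky))).
  have ha := Aa y Ky; have hb := Ab y Ky.
  rewrite (_ : y a - y b = (f y - y b) - (f y - y a)); last first.
    by ring.
  apply: le_trans (ler_normB _ _) _.
  by rewrite [eps]splitr; apply: lerD.
have [x0 Hx0] := Mc F FF cauchy.
have fy y : Y y -> f y = y x0.
  move=> Yy; apply/eqP; rewrite -subr_eq0 -normr_le0.
  apply/ler_addgt0Pr => e e0; rewrite add0r.
  have Ms := seg_mackey DY Yy.
  have FA := Hx0 _ Ms (e / 2) (divr_gt0 e0 (ltr0Sn _ 1)).
  have FB : F (Ag (seg y) (e / 2)).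
    by exists (seg y), (e / 2); split => //; rewrite divr_gt0.
  have [z [hA hB]] := filter_ex (filterI FA FB).
  have sy : seg y y by exists 1; split; [rewrite normr1|apply: funext => x; rewrite mul1r].
  have h1 := hA y sy; have h2 := hB y sy.
  rewrite (lfB _ _ (Ylin y Yy)) in h1.
  rewrite (_ : f y - y x0 = (f y - y z) + (y z - y x0)); last by rewrite addrA subrK.
  apply: le_trans (ler_normD _ _) _.
  by rewrite [e]splitr; apply: lerD.
move=> y Yy eps e0; exists [:: x0], eps; split => // z Yz hz.
by rewrite !fy //; apply: hz; rewrite mem_seq1.
Qed.
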